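(* Consider the Normal Partizan Domination game on a star $K_{1,n}$ with $n\geq 2$, whose universal (center) vertex has color $A$, with $a$ leaves of color $A$ and $b=n-a$ leaves of color $B$. Its value is: $a-b$ if $b<a$; $1/2^{b-a+1}$ if $b\geq a\geq 1$; $(b-1)\cdot\uparrow *$ if $b$ is odd and $a=0$; $(b-1)\cdot\uparrow$ if $b$ is even and $a=0$. If instead the universal vertex has color $B$, the value is $-J$, where $J$ is the value of the game obtained by interchanging the colors $A$ and $B$ on all vertices.
   Context: Normal Partizan Domination game: a finite graph $G$ has each vertex colored $A$, $B$ or $C$. Alice and Bob alternately select a vertex; Alice may only select vertices colored $A$ or $C$, Bob only vertices colored $B$ or $C$. A vertex $u$ dominates $v$ if $u=v$ or $uv$ is an edge. A vertex may be selected only if it is playable, i.e. it dominates at least one vertex not dominated by the previously selected vertices; the game ends when the selected vertices form a dominating set. Under normal play the player unable to move loses. The game is regarded as a partizan combinatorial game with Alice as Left and Bob as Right, and its value is its value in Conway's combinatorial game theory ($\{X\mid Y\}$ has Left options $X$ and Right options $Y$; $G+H$ is the disjunctive sum; $-G$ swaps Left and Right; $G=H$ iff $G+(-H)$ is a second-player win). Notation: integers and dyadic rationals $1/2^k$ are the usual number games; $*=\{0\mid 0\}$; $\uparrow=\{0\mid *\}$; $m\cdot\uparrow$ is the sum of $m$ copies of $\uparrow$ (and $0\cdot\uparrow=0$); $J*$ denotes $J+*$. *)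

(* Defs.v *)
From HB Require Import structures.
From mathcomp Require Import all_boot.
Set Implicit Arguments. Unset Strict Implicit. Unset Printing Implicit Defensive.

(* Game L R : L = Left (Alice) options, R = Right (Bob) options. *)
Inductive game : Type := Game : seq game -> seq game -> game.

Definition lopts (G : game) := let: Game l _ := G in l.
Definition ropts (G : game) := let: Game _ r := G in r.

Fixpoint neg (G : game) : game :=
  let: Game l r := G in Game (map neg r) (map neg l).

Fixpoint add (G H : game) {struct G} : game :=
  let fix addH (H : game) : game :=
    match G, H with
    | Game gl gr, Game hl hr =>
        Game (map (fun g => add g H) gl ++ map addH hl)
             (map (fun g => add g H) gr ++ map addH hr)
    end
  in addH H.

(* outcome under normal play: (Left wins moving first, Right wins moving first) *)
Fixpoint outc (G : game) : bool * bool :=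
  let: Game l r := G in
  (has (fun g => ~~ (outc g).2) l, has (fun g => ~~ (outc g).1) r).

Definition second_player_win (G : game) : bool := ~~ (outc G).1 && ~~ (outc G).2.

Definition game_eq (G H : game) : Prop := second_player_win (add G (neg H)).

Definition zero : game := Game [::] [::].
Definition star : game := Game [:: zero] [:: zero].
Definition up : game := Game [:: zero] [:: star].

Fixpoint nat_game (k : nat) : game :=
  if k is k'.+1 then Game [:: nat_game k'] [::] else zero.

Fixpoint half_pow (k : nat) : game :=
  if k is k'.+1 then Game [:: zero] [:: half_pow k'] else nat_game 1.

Definition mul_up (m : nat) : game := iter m (add up) zero.

Inductive color := colA | colB | colC.
Definition color_eqb (c d : color) : bool :=
  match c, d with colA, colA | colB, colB | colC, colC => true | _, _ => false end.
Lemma color_eqP : Equality.axiom color_eqb.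
Proof. by case; case; constructor. Qed.
HB.instance Definition _ := hasDecEq.Build color color_eqP.

Section Domination.
Variables (T : finType) (adj : rel T) (col : T -> color).

Definition cnbh (v : T) : {set T} := [set u | (u == v) || adj v u].

Definition playable (D : {set T}) (v : T) : bool := ~~ (cnbh v \subset D).

Definition alice_col (v : T) : bool := col v != colB.
Definition bob_col (v : T) : bool := col v != colA.

(* position with dominated set D; k is fuel (each move strictly enlarges D,
   so fuel #|T| is never exhausted before the game ends) *)
Fixpoint dom_pos (k : nat) (D : {set T}) : game :=
  if k is k'.+1 then
    Game [seq dom_pos k' (D :|: cnbh v) | v <- enum T & alice_col v && playable D v]
         [seq dom_pos k' (D :|: cnbh v) | v <- enum T & bob_col v && playable D v]
  else zero.

Definition dom_game : game := dom_pos #|T| set0.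
End Domination.

Definition star_adj (n : nat) : rel 'I_n.+1 :=
  fun i j => (i == ord0) != (j == ord0).

Definition swap_col (c : color) : color :=
  match c with colA => colB | colB => colA | colC => colC end.

Definition leaf_count (n : nat) (col : 'I_n.+1 -> color) (c : color) : nat :=
  #|[set i : 'I_n.+1 | (i != ord0) && (col i == c)]|.

(* Main.v *)
Require Import Defs.
From mathcomp Require Import all_boot.
From mathcomp Require Import zify.

Lemma add_Game gl gr hl hr : add (Game gl gr) (Game hl hr) =
  Game (map (fun g => add g (Game hl hr)) gl ++ map (fun h => add (Game gl gr) h) hl)
       (map (fun g => add g (Game hl hr)) gr ++ map (fun h => add (Game gl gr) h) hr).
Proof. reflexivity. Qed.

Fixpoint gsize (g : game) : nat :=
  let: Game l r := g in (sumn (map gsize l) + sumn (map gsize r)).+1.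

Lemma In_sumn g l : List.In g l -> gsize g <= sumn (map gsize l).
Proof.
elim: l => [//|h l IH] /= [->|/IH]; lia.
Qed.

Lemma In_size_l g l r : List.In g l -> gsize g < gsize (Game l r).
Proof. move/In_sumn => /=; lia. Qed.
Lemma In_size_r g l r : List.In g r -> gsize g < gsize (Game l r).
Proof. move/In_sumn => /=; lia. Qed.

Lemma has_In (T : Type) (p : pred T) s : has p s <-> exists x, List.In x s /\ p x.
Proof.
elim: s => [|h s IH] /=; first by split => // [[x []]].
split.
- case/orP => [H|/IH [x [H1 H2]]]; first by exists h; auto.
  by exists x; auto.
- case=> x [[<-|H1] H2]; first by rewrite H2.
  by apply/orP; right; apply/IH; exists x.
Qed.

Lemma In_lopts_add t1 t2 l : List.In l (lopts (add t1 t2)) <->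
  (exists l1, List.In l1 (lopts t1) /\ l = add l1 t2) \/
  (exists l2, List.In l2 (lopts t2) /\ l = add t1 l2).
Proof.
case: t1 => gl gr; case: t2 => hl hr; rewrite add_Game /= List.in_app_iff !List.in_map_iff.
split.
- case=> [[x [<- H]]|[x [<- H]]]; by [left; exists x | right; exists x].
- case=> [[x [H ->]]|[x [H ->]]]; by [left; exists x | right; exists x].
Qed.

Lemma In_ropts_add t1 t2 l : List.In l (ropts (add t1 t2)) <->
  (exists l1, List.In l1 (ropts t1) /\ l = add l1 t2) \/
  (exists l2, List.In l2 (ropts t2) /\ l = add t1 l2).
Proof.
case: t1 => gl gr; case: t2 => hl hr; rewrite add_Game /= List.in_app_iff !List.in_map_iff.
split.
- case=> [[x [<- H]]|[x [<- H]]]; by [left; exists x | right; exists x].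
- case=> [[x [H ->]]|[x [H ->]]]; by [left; exists x | right; exists x].
Qed.

Section AG.
Variable S : Type.
Variable Rep : game -> S -> Prop.
Variables lm rm : S -> S -> Prop.
Definition sound_l := forall t s l, Rep t s -> List.In l (lopts t) -> exists s', lm s s' /\ Rep l s'.
Definition sound_r := forall t s r, Rep t s -> List.In r (ropts t) -> exists s', rm s s' /\ Rep r s'.
Definition compl_l := forall t s s', Rep t s -> lm s s' -> exists l, List.In l (lopts t) /\ Rep l s'.
Definition compl_r := forall t s s', Rep t s -> rm s s' -> exists r, List.In r (ropts t) /\ Rep r s'.

Lemma le0_by (QL : S -> Prop) : sound_l -> compl_r ->
  (forall s, QL s -> forall s', lm s s' -> exists s'', rm s' s'' /\ QL s'') ->
  forall t s, Rep t s -> QL s -> ~~ (outc t).1.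
Proof.
move=> sl cr cl.
suff H: forall N t s, gsize t < N -> Rep t s -> QL s -> ~~ (outc t).1 by move=> t s; apply: H.
elim=> [|N IH] [l r] s //= Hsz Hr Hq.
apply/negP => /has_In [[gl gr] [Hg Hg2]].
have [s' [Hm Hr']] := sl _ _ _ Hr Hg.
have [s'' [Hm' Hq']] := cl _ Hq _ Hm.
have [r0 [Hr0 Hrep]] := cr _ _ _ Hr' Hm'.
move/negP: Hg2; apply; apply/has_In; exists r0; split => //.
apply: IH Hrep Hq'.
have h1 := @In_size_r _ gl _ Hr0; have h2 := @In_size_l _ _ r Hg; simpl in h1, h2, Hsz; lia.
Qed.

Lemma ge0_by (QR : S -> Prop) : sound_r -> compl_l ->
  (forall s, QR s -> forall s', rm s s' -> exists s'', lm s' s'' /\ QR s'') ->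
  forall t s, Rep t s -> QR s -> ~~ (outc t).2.
Proof.
move=> sl cr cl.
suff H: forall N t s, gsize t < N -> Rep t s -> QR s -> ~~ (outc t).2 by move=> t s; apply: H.
elim=> [|N IH] [l r] s //= Hsz Hr Hq.
apply/negP => /has_In [[gl gr] [Hg Hg2]].
have [s' [Hm Hr']] := sl _ _ _ Hr Hg.
have [s'' [Hm' Hq']] := cl _ Hq _ Hm.
have [r0 [Hr0 Hrep]] := cr _ _ _ Hr' Hm'.
move/negP: Hg2; apply; apply/has_In; exists r0; split => //.
apply: IH Hrep Hq'.
have h1 := @In_size_l _ _ gr Hr0; have h2 := @In_size_r _ l _ Hg; simpl in h1, h2, Hsz; lia.
Qed.
End AG.
Arguments sound_l {S}.
Arguments sound_r {S}.
Arguments compl_l {S}.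
Arguments compl_r {S}.
Arguments le0_by {S Rep lm rm}.
Arguments ge0_by {S Rep lm rm}.

Section Sum.
Variables (S1 S2 : Type) (R1 : game -> S1 -> Prop) (R2 : game -> S2 -> Prop).
Variables (lm1 rm1 : S1 -> S1 -> Prop) (lm2 rm2 : S2 -> S2 -> Prop).
Definition RepS t (p : S1 * S2) := exists t1 t2, t = add t1 t2 /\ R1 t1 p.1 /\ R2 t2 p.2.
Definition mS (m1 : S1 -> S1 -> Prop) (m2 : S2 -> S2 -> Prop) (p q : S1 * S2) :=
  (m1 p.1 q.1 /\ q.2 = p.2) \/ (q.1 = p.1 /\ m2 p.2 q.2).

Lemma sumS_l : sound_l R1 lm1 -> sound_l R2 lm2 -> sound_l RepS (mS lm1 lm2).
Proof.
move=> h1 h2 t [s1 s2] l [t1 [t2 [-> [H1 H2]]]] /In_lopts_add [[l1 [Hl ->]]|[l2 [Hl ->]]].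
- have [s' [Hm Hr]] := h1 _ _ _ H1 Hl.
  exists (s', s2); split; first by left.
  by exists l1, t2.
- have [s' [Hm Hr]] := h2 _ _ _ H2 Hl.
  exists (s1, s'); split; first by right.
  by exists t1, l2.
Qed.
Lemma sumS_r : sound_r R1 rm1 -> sound_r R2 rm2 -> sound_r RepS (mS rm1 rm2).
Proof.
move=> h1 h2 t [s1 s2] l [t1 [t2 [-> [H1 H2]]]] /In_ropts_add [[l1 [Hl ->]]|[l2 [Hl ->]]].
- have [s' [Hm Hr]] := h1 _ _ _ H1 Hl.
  exists (s', s2); split; first by left.
  by exists l1, t2.
- have [s' [Hm Hr]] := h2 _ _ _ H2 Hl.
  exists (s1, s'); split; first by right.
  by exists t1, l2.
Qed.
Lemma sumC_l : compl_l R1 lm1 -> compl_l R2 lm2 -> compl_l RepS (mS lm1 lm2).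
Proof.
move=> h1 h2 t [s1 s2] [s1' s2'] [t1 [t2 [-> [H1 H2]]]]; rewrite /mS /=; case=> [[Hm ->]|[-> Hm]].
- have [l [Hl Hr]] := h1 _ _ _ H1 Hm.
  exists (add l t2); split; first by apply/In_lopts_add; left; exists l.
  by exists l, t2.
- have [l [Hl Hr]] := h2 _ _ _ H2 Hm.
  exists (add t1 l); split; first by apply/In_lopts_add; right; exists l.
  by exists t1, l.
Qed.
Lemma sumC_r : compl_r R1 rm1 -> compl_r R2 rm2 -> compl_r RepS (mS rm1 rm2).
Proof.
move=> h1 h2 t [s1 s2] [s1' s2'] [t1 [t2 [-> [H1 H2]]]]; rewrite /mS /=; case=> [[Hm ->]|[-> Hm]].
- have [l [Hl Hr]] := h1 _ _ _ H1 Hm.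
  exists (add l t2); split; first by apply/In_ropts_add; left; exists l.
  by exists l, t2.
- have [l [Hl Hr]] := h2 _ _ _ H2 Hm.
  exists (add t1 l); split; first by apply/In_ropts_add; right; exists l.
  by exists t1, l.
Qed.
End Sum.
Arguments RepS {S1 S2}.
Arguments mS {S1 S2}.
Arguments sumS_l {S1 S2 R1 R2 lm1 lm2}.
Arguments sumS_r {S1 S2 R1 R2 rm1 rm2}.
Arguments sumC_l {S1 S2 R1 R2 lm1 lm2}.
Arguments sumC_r {S1 S2 R1 R2 rm1 rm2}.

Lemma lopts_neg h : lopts (neg h) = map neg (ropts h).
Proof. by case: h. Qed.
Lemma ropts_neg h : ropts (neg h) = map neg (lopts h).
Proof. by case: h. Qed.

Definition RepM t (p : game * game) := t = add p.1 (neg p.2).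
Definition lmM (p q : game * game) :=
  (List.In q.1 (lopts p.1) /\ q.2 = p.2) \/ (q.1 = p.1 /\ List.In q.2 (ropts p.2)).
Definition rmM (p q : game * game) :=
  (List.In q.1 (ropts p.1) /\ q.2 = p.2) \/ (q.1 = p.1 /\ List.In q.2 (lopts p.2)).

Lemma mirror g : second_player_win (add g (neg g)).
Proof.
have sl : sound_l RepM lmM.
  move=> t [g1 h1] l -> /In_lopts_add [[l1 [Hl ->]]|[l2 [Hl ->]]].
  - by exists (l1, h1); split => //; left.
  - move: Hl; rewrite lopts_neg => /List.in_map_iff [x [<- Hx]].
    by exists (g1, x); split => //; right.
have sr : sound_r RepM rmM.
  move=> t [g1 h1] l -> /In_ropts_add [[l1 [Hl ->]]|[l2 [Hl ->]]].
  - by exists (l1, h1); split => //; left.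
  - move: Hl; rewrite ropts_neg => /List.in_map_iff [x [<- Hx]].
    by exists (g1, x); split => //; right.
have cl : compl_l RepM lmM.
  move=> t [g1 h1] [g2 h2] -> [[/= H ->]|[/= -> H]].
  - by exists (add g2 (neg h1)); split => //; apply/In_lopts_add; left; exists g2.
  - exists (add g1 (neg h2)); split => //; apply/In_lopts_add; right; exists (neg h2).
    by rewrite lopts_neg List.in_map_iff; split => //; exists h2.
have cr : compl_r RepM rmM.
  move=> t [g1 h1] [g2 h2] -> [[/= H ->]|[/= -> H]].
  - by exists (add g2 (neg h1)); split => //; apply/In_ropts_add; left; exists g2.
  - exists (add g1 (neg h2)); split => //; apply/In_ropts_add; right; exists (neg h2).
    by rewrite ropts_neg List.in_map_iff; split => //; exists h2.
rewrite /second_player_win; apply/andP; split.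
- apply: (le0_by (fun p => p.1 = p.2) sl cr _ (add g (neg g)) (g, g)) => //.
  move=> [g1 h1] /= <- [g2 h2] [[/= H ->]|[/= -> H]].
  + by exists (g2, g2); split => //; right.
  + by exists (h2, h2); split => //; left.
- apply: (ge0_by (fun p => p.1 = p.2) sr cl _ (add g (neg g)) (g, g)) => //.
  move=> [g1 h1] /= <- [g2 h2] [[/= H ->]|[/= -> H]].
  + by exists (g2, g2); split => //; right.
  + by exists (h2, h2); split => //; left.
Qed.

Lemma neg_dom_swap (T : finType) (adj : rel T) (col : T -> color) k D :
  neg (dom_pos adj (swap_col \o col) k D) = dom_pos adj col k D.
Proof.
elim: k D => [//|k IH] D /=.
have Ha : forall v, alice_col (swap_col \o col) v = bob_col col v.
  by move=> v; rewrite /alice_col /bob_col /=; case: (col v).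
have Hb : forall v, bob_col (swap_col \o col) v = alice_col col v.
  by move=> v; rewrite /alice_col /bob_col /=; case: (col v).
rewrite -!map_comp.
congr Game.
- rewrite (@eq_filter _ _ (fun v => alice_col col v && playable adj D v)); last by move=> v; rewrite Hb.
  by apply: eq_map => v /=; rewrite IH.
- rewrite (@eq_filter _ _ (fun v => bob_col col v && playable adj D v)); last by move=> v; rewrite Ha.
  by apply: eq_map => v /=; rewrite IH.
Qed.

Set Implicit Arguments. Unset Strict Implicit.

Lemma In_mem (T : eqType) (x : T) s : List.In x s <-> x \in s.
Proof.
elim: s => [//|h s IH] /=; rewrite inE; split.
- by case=> [->|/IH ->]; rewrite ?eqxx ?orbT.
- by case/orP => [/eqP ->|/IH]; auto.
Qed.

Section DPsec.
Variables (n : nat) (col : 'I_n.+1 -> color).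
Hypothesis hn : 0 < n.
Hypothesis hc0 : col ord0 = colA.
Hypothesis hleaf : forall i : 'I_n.+1, i != ord0 -> (col i == colA) || (col i == colB).
Local Notation T := ('I_n.+1).
Local Notation adj := (@star_adj n).

Definition cnt (c : color) (D : {set T}) :=
  #|[set i : T | (i != ord0) && (col i == c) && (i \notin D)]|.
Definition valid k (D : {set T}) := ((D == set0) || (ord0 \in D)) && (#|~: D| <= k).
Definition DP t (p : nat * nat) := exists k D, t = dom_pos adj col k D /\ valid k D /\
  p.1 = cnt colA D /\ p.2 = cnt colB D.
Definition lmD (p q : nat * nat) := (1 <= p.1 /\ q = (p.1.-1, p.2)) \/ (1 <= p.1 + p.2 /\ q = (0,0)).
Definition rmD (p q : nat * nat) := 1 <= p.2 /\ q = (p.1, p.2.-1).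

Lemma cnbh0 : cnbh adj ord0 = setT.
Proof. by apply/setP => u; rewrite !inE /star_adj eqxx; case: (u == ord0). Qed.

Lemma cnbhv v : v != ord0 -> cnbh adj v = [set v; ord0].
Proof.
move=> hv; apply/setP => u; rewrite !inE /star_adj (negbTE hv) /=.
by case: (u == ord0); rewrite ?orbT ?orbF.
Qed.

Lemma dom_setT k : dom_pos adj col k setT = zero.
Proof.
case: k => [//|k] /=.
have P : forall v, playable adj setT v = false.
  by move=> v; rewrite /playable subsetT.
by rewrite !(@eq_filter _ _ pred0) ?filter_pred0 // => v; rewrite P andbF.
Qed.

Lemma playable_leaf k (D : {set T}) (v : T) : valid k D -> v != ord0 -> playable adj D v = (v \notin D).
Proof.
case/andP => /orP [/eqP -> | h0] _ hv; rewrite /playable cnbhv // subUset !sub1set.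
- by rewrite !inE.
- by rewrite h0 andbT.
Qed.

Lemma playable_center (D : {set T}) : playable adj D ord0 = (D != setT).
Proof. by rewrite /playable cnbh0 subTset. Qed.

Lemma leaf_move k (D : {set T}) (v : T) : valid k.+1 D -> v != ord0 -> v \notin D ->
  valid k (D :|: cnbh adj v) /\ (forall c, cnt c (D :|: cnbh adj v) = cnt c D - (col v == c)).
Proof.
move=> /andP [_ hk] hv hvD; rewrite cnbhv //; split.
- apply/andP; split; first by rewrite !inE eqxx !orbT.
  have hsub : ~: (D :|: [set v; ord0]) \subset (~: D) :\ v.
    by apply/subsetP => u; rewrite !inE => /norP [h1 /norP [h2 _]]; rewrite h1 h2.
  apply: leq_trans (subset_leq_card hsub) _.
  by move: hk; rewrite (cardsD1 v (~: D)) in_setC hvD add1n ltnS.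
- move=> c; rewrite /cnt.
  have -> : [set i : T | (i != ord0) && (col i == c) && (i \notin D :|: [set v; ord0])] =
            [set i : T | (i != ord0) && (col i == c) && (i \notin D)] :\ v.
    apply/setP => u; rewrite !inE.
    case: (eqVneq u v) => [->|huv]; first by rewrite /= orbT andbF.
    by case: (u == ord0); case: (u \in D); rewrite /= ?andbF ?andbT.
  rewrite (cardsD1 v [set i : T | (i != ord0) && (col i == c) && (i \notin D)]) inE hv hvD andbT /=.
  lia.
Qed.

Lemma cnt_setT c : cnt c setT = 0.
Proof. by apply/eqP; rewrite cards_eq0; apply/eqP/setP => u; rewrite !inE andbF. Qed.

Lemma cnt_ge1 c (D : {set T}) (v : T) : v != ord0 -> v \notin D -> col v == c -> 1 <= cnt c D.
Proof. by move=> h1 h2 h3; apply/card_gt0P; exists v; rewrite inE h1 h2 h3. Qed.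

Lemma get_leaf c (D : {set T}) : 1 <= cnt c D -> exists v, [/\ v != ord0, col v == c & v \notin D].
Proof.
by case/card_gt0P => v; rewrite inE => /andP [/andP [h1 h2] h3]; exists v.
Qed.

Lemma leaf_pos (D : {set T}) (u : T) : u != ord0 -> u \notin D -> 1 <= cnt colA D + cnt colB D.
Proof.
move=> h1 h2; case/orP: (hleaf h1) => h3.
- by have := cnt_ge1 h1 h2 h3; lia.
- by have := cnt_ge1 h1 h2 h3; lia.
Qed.

Lemma cnt_pos k (D : {set T}) : valid k D -> D != setT -> 1 <= cnt colA D + cnt colB D.
Proof.
case/andP => /orP [/eqP -> | h0] _ hT.
- have hw : (inord 1 : T) != ord0.
    by apply/eqP => /(congr1 val); rewrite /= inordK //; lia.
  by apply: (leaf_pos hw); rewrite inE.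
- have : ~~ (setT \subset D) by rewrite subTset.
  case/subsetPn => u _ hu.
  have hu0 : u != ord0 by apply/eqP => e; move: hu; rewrite e h0.
  exact: leaf_pos hu0 hu.
Qed.

Lemma valid_pos k (D : {set T}) (v : T) : valid k D -> v \notin D -> exists k', k = k'.+1.
Proof.
case/andP => _ hk hv; case: k hk => [|k] hk; last by exists k.
have : 0 < #|~: D| by apply/card_gt0P; exists v; rewrite in_setC.
lia.
Qed.

Lemma DP_setT k : DP (dom_pos adj col k setT) (0, 0).
Proof.
exists k, setT; split => //; split; last by rewrite !cnt_setT.
by rewrite /valid !inE orbT setCT cards0.
Qed.

Lemma DP_sound_l : sound_l DP lmD.
Proof.
move=> t [x y] l [k [D [-> [hv [/= hx hy]]]]].
case: k hv => [|k] hv; first by [].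
rewrite /= => /List.in_map_iff [v [<- /In_mem]]; rewrite mem_filter mem_enum andbT => /andP [ha hp].
case: (eqVneq v ord0) => [e | hv0].
- subst v; exists (0,0); split; last by rewrite cnbh0 setUT; apply: DP_setT.
  right; split => //; rewrite hx hy; apply: cnt_pos hv _; by rewrite -playable_center.
- have hcol : col v == colA.
    by move: ha (hleaf hv0); rewrite /alice_col; case: (col v).
  have hvD : v \notin D by rewrite -(playable_leaf hv).
  have [hv' hc] := leaf_move hv hv0 hvD.
  exists (x.-1, y); split.
  + left; split => //; rewrite hx; exact: cnt_ge1 hv0 hvD hcol.
  + exists k, (D :|: cnbh adj v); split => //; split => //; rewrite /= !hc hx hy (eqP hcol) /=; lia.
Qed.

Lemma DP_sound_r : sound_r DP rmD.
Proof.
move=> t [x y] l [k [D [-> [hv [/= hx hy]]]]].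
case: k hv => [|k] hv; first by [].
rewrite /= => /List.in_map_iff [v [<- /In_mem]]; rewrite mem_filter mem_enum andbT => /andP [ha hp].
case: (eqVneq v ord0) => [e | hv0].
- by subst v; move: ha; rewrite /bob_col hc0.
- have hcol : col v == colB.
    by move: ha (hleaf hv0); rewrite /bob_col; case: (col v).
  have hvD : v \notin D by rewrite -(playable_leaf hv).
  have [hv' hc] := leaf_move hv hv0 hvD.
  exists (x, y.-1); split.
  + split => //; rewrite hy; exact: cnt_ge1 hv0 hvD hcol.
  + exists k, (D :|: cnbh adj v); split => //; split => //; rewrite /= !hc hx hy (eqP hcol) /=; lia.
Qed.

Lemma DP_compl_l : compl_l DP lmD.
Proof.
move=> t [x y] q [k [D [-> [hv [/= hx hy]]]]] [[/= hx1 ->]|[/= hxy ->]].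
- have hh : 1 <= cnt colA D by rewrite -hx.
  have [v [hv0 hcol hvD]] := get_leaf hh.
  have [k' ek] := valid_pos hv hvD; subst k.
  have [hv' hc] := leaf_move hv hv0 hvD.
  exists (dom_pos adj col k' (D :|: cnbh adj v)); split.
  + rewrite /=; apply/List.in_map_iff; exists v; split => //; apply/In_mem.
    rewrite mem_filter mem_enum andbT (playable_leaf hv) // hvD andbT /alice_col (eqP hcol) //.
  + exists k', (D :|: cnbh adj v); split => //; split => //; rewrite /= !hc hx hy (eqP hcol) /=; lia.
- have [u [hu0 hu]] : exists u, u != ord0 /\ u \notin D.
    case: (ltnP 0 (cnt colA D)) => h.
    + by have [v [? ? ?]] := get_leaf h; exists v.
    + have hh : 1 <= cnt colB D by lia.
      by have [v [? ? ?]] := get_leaf hh; exists v.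
  have [k' ek] := valid_pos hv hu; subst k.
  exists (dom_pos adj col k' (D :|: cnbh adj ord0)); split.
  + rewrite /=; apply/List.in_map_iff; exists ord0; split => //; apply/In_mem.
    rewrite mem_filter mem_enum andbT playable_center /alice_col hc0 /=.
    by apply/eqP => e; move: hu; rewrite e inE.
  + rewrite cnbh0 setUT; exact: DP_setT.
Qed.

Lemma DP_compl_r : compl_r DP rmD.
Proof.
move=> t [x y] q [k [D [-> [hv [/= hx hy]]]]] [/= hy1 ->].
have hh : 1 <= cnt colB D by rewrite -hy.
have [v [hv0 hcol hvD]] := get_leaf hh.
have [k' ek] := valid_pos hv hvD; subst k.
have [hv' hc] := leaf_move hv hv0 hvD.
exists (dom_pos adj col k' (D :|: cnbh adj v)); split.
+ rewrite /=; apply/List.in_map_iff; exists v; split => //; apply/In_mem.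
  rewrite mem_filter mem_enum andbT (playable_leaf hv) // hvD andbT /bob_col (eqP hcol) //.
+ exists k', (D :|: cnbh adj v); split => //; split => //; rewrite /= !hc hx hy (eqP hcol) /=; lia.
Qed.

Lemma DP_init : DP (dom_game adj col) (leaf_count col colA, leaf_count col colB).
Proof.
exists #|T|, set0; split => //; split.
  by rewrite /valid eqxx /= setC0 cardsT.
by split; apply: eq_card => i; rewrite !inE andbT.
Qed.
End DPsec.

Lemma map_ext_In (A B : Type) (f g : A -> B) (s : seq A) :
  (forall x, List.In x s -> f x = g x) -> map f s = map g s.
Proof.
elim: s => [//|h s IH] H /=.
rewrite (H h (or_introl erefl)) IH // => x hx; apply: H; by right.
Qed.

Lemma neg_add G H : neg (add G H) = add (neg G) (neg H).
Proof.
suff: forall N G H, gsize G + gsize H < N -> neg (add G H) = add (neg G) (neg H) by eauto.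
elim=> [//|N IH] [gl gr] [hl hr] hs.
have eH : neg (Game hl hr) = Game (map neg hr) (map neg hl) by [].
have eG : neg (Game gl gr) = Game (map neg gr) (map neg gl) by [].
have eX : forall a b, neg (Game a b) = Game (map neg b) (map neg a) by [].
rewrite add_Game eG eH add_Game {1}eX -eH -eG.
congr Game; rewrite map_cat -!map_comp; congr (_ ++ _); apply: map_ext_In => x hx; rewrite /comp.
- rewrite IH //; have := @In_size_r x gl gr hx; simpl in hs |- *; lia.
- rewrite IH //; have := @In_size_r x hl hr hx; simpl in hs |- *; lia.
- rewrite IH //; have := @In_size_l x gl gr hx; simpl in hs |- *; lia.
- rewrite IH //; have := @In_size_l x hl hr hx; simpl in hs |- *; lia.
Qed.

Definition RepN t k := t = neg (nat_game k).
Definition lmN (k k' : nat) := False.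
Definition rmN (k k' : nat) := 1 <= k /\ k' = k.-1.
Lemma N_sound_l : sound_l RepN lmN.
Proof. by move=> t [|k] l ->. Qed.
Lemma N_sound_r : sound_r RepN rmN.
Proof. by move=> t [|k] l -> //= [<-|//]; exists k. Qed.
Lemma N_compl_l : compl_l RepN lmN.
Proof. by []. Qed.
Lemma N_compl_r : compl_r RepN rmN.
Proof. by move=> t [|k] k' -> [//= _ ->]; exists (neg (nat_game k)); split => //; left. Qed.

Definition RepH t (h : option nat) := if h is Some j then t = neg (half_pow j) else t = zero.
Definition lmH (h h' : option nat) := exists j, h = Some j /\ 1 <= j /\ h' = Some j.-1.
Definition rmH (h h' : option nat) := h <> None /\ h' = None.
Lemma H_sound_l : sound_l RepH lmH.
Proof.
move=> t [[|j]|] l -> //= [<-|//]; by exists (Some j); split => //; exists j.+1.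
Qed.
Lemma H_sound_r : sound_r RepH rmH.
Proof.
by move=> t [[|j]|] l -> //= [<-|//]; exists None.
Qed.
Lemma H_compl_l : compl_l RepH lmH.
Proof.
move=> t h h' Ht [[|j] [e [hj ->]]] //; subst h; rewrite /RepH in Ht; subst t.
by exists (neg (half_pow j)); split => //; left.
Qed.
Lemma H_compl_r : compl_r RepH rmH.
Proof.
move=> t [[|j]|] h' Ht [hn ->] //; rewrite /RepH in Ht; subst t;
  by exists zero; split => //; left.
Qed.

Definition down := neg up.
Inductive Ch : game -> nat * nat -> Prop :=
 | Ch0 : Ch zero (0,0)
 | ChD : Ch down (1,0)
 | ChS : Ch star (0,1)
 | ChA t1 t2 p1 p2 q : Ch t1 p1 -> Ch t2 p2 -> q.1 = p1.1 + p2.1 -> q.2 = p1.2 + p2.2 ->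
     Ch (add t1 t2) q.
Definition lmC (p q : nat * nat) :=
  (1 <= p.1 /\ q = (p.1.-1, p.2.+1)) \/ (1 <= p.2 /\ q = (p.1, p.2.-1)).
Definition rmC (p q : nat * nat) :=
  (1 <= p.1 /\ q = (p.1.-1, p.2)) \/ (1 <= p.2 /\ q = (p.1, p.2.-1)).

Lemma C_sound_l : sound_l Ch lmC.
Proof.
move=> t s l H; elim: H l => {t s}.
- by [].
- move=> l /= [<-|//]; exists (0,1); split; [by left | exact: ChS].
- move=> l /= [<-|//]; exists (0,0); split; [by right | exact: Ch0].
- move=> t1 t2 [u1 s1] [u2 s2] [u s] h1 IH1 h2 IH2 /= eu es l /In_lopts_add
    [[l1 [hl ->]]|[l2 [hl ->]]].
  + have [[u' s'] [hm hc]] := IH1 _ hl.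
    exists (u' + u2, s' + s2); split; last by apply: ChA hc h2 _ _.
    case: hm => [[/= ? [-> ->]]|[/= ? [-> ->]]]; [left|right]; split => //=; try lia; congr pair; lia.
  + have [[u' s'] [hm hc]] := IH2 _ hl.
    exists (u1 + u', s1 + s'); split; last by apply: ChA h1 hc _ _.
    case: hm => [[/= ? [-> ->]]|[/= ? [-> ->]]]; [left|right]; split => //=; try lia; congr pair; lia.
Qed.

Lemma C_sound_r : sound_r Ch rmC.
Proof.
move=> t s l H; elim: H l => {t s}.
- by [].
- move=> l /= [<-|//]; exists (0,0); split; [by left | exact: Ch0].
- move=> l /= [<-|//]; exists (0,0); split; [by right | exact: Ch0].
- move=> t1 t2 [u1 s1] [u2 s2] [u s] h1 IH1 h2 IH2 /= eu es l /In_ropts_add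
    [[l1 [hl ->]]|[l2 [hl ->]]].
  + have [[u' s'] [hm hc]] := IH1 _ hl.
    exists (u' + u2, s' + s2); split; last by apply: ChA hc h2 _ _.
    case: hm => [[/= ? [-> ->]]|[/= ? [-> ->]]]; [left|right]; split => //=; try lia; congr pair; lia.
  + have [[u' s'] [hm hc]] := IH2 _ hl.
    exists (u1 + u', s1 + s'); split; last by apply: ChA h1 hc _ _.
    case: hm => [[/= ? [-> ->]]|[/= ? [-> ->]]]; [left|right]; split => //=; try lia; congr pair; lia.
Qed.

Lemma C_compl_l : compl_l Ch lmC.
Proof.
move=> t s s' H; elim: H s' => {t s}.
- by move=> s' [[/= ? _]|[/= ? _]].
- move=> s' [[/= _ ->]|[/= ? _]] //; exists star; split; [by left | exact: ChS].
- move=> s' [[/= ? _]|[/= _ ->]] //; exists zero; split; [by left| exact: Ch0].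
- move=> t1 t2 [u1 s1] [u2 s2] [u s] h1 IH1 h2 IH2 /= eu es s' [[/= hu ->]|[/= hs ->]].
  + case: (ltnP 0 u1) => hu1.
    * have [l [hl hc]] := IH1 (u1.-1, s1.+1) (or_introl (conj hu1 erefl)).
      exists (add l t2); split; first by apply/In_lopts_add; left; exists l.
      apply: ChA hc h2 _ _ => /=; lia.
    * have hu2 : 0 < u2 by lia.
      have [l [hl hc]] := IH2 (u2.-1, s2.+1) (or_introl (conj hu2 erefl)).
      exists (add t1 l); split; first by apply/In_lopts_add; right; exists l.
      apply: ChA h1 hc _ _ => /=; lia.
  + case: (ltnP 0 s1) => hs1.
    * have [l [hl hc]] := IH1 (u1, s1.-1) (or_intror (conj hs1 erefl)).
      exists (add l t2); split; first by apply/In_lopts_add; left; exists l.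
      apply: ChA hc h2 _ _ => /=; lia.
    * have hs2 : 0 < s2 by lia.
      have [l [hl hc]] := IH2 (u2, s2.-1) (or_intror (conj hs2 erefl)).
      exists (add t1 l); split; first by apply/In_lopts_add; right; exists l.
      apply: ChA h1 hc _ _ => /=; lia.
Qed.

Lemma C_compl_r : compl_r Ch rmC.
Proof.
move=> t s s' H; elim: H s' => {t s}.
- by move=> s' [[/= ? _]|[/= ? _]].
- move=> s' [[/= _ ->]|[/= ? _]] //; exists zero; split; [by left | exact: Ch0].
- move=> s' [[/= ? _]|[/= _ ->]] //; exists zero; split; [by left| exact: Ch0].
- move=> t1 t2 [u1 s1] [u2 s2] [u s] h1 IH1 h2 IH2 /= eu es s' [[/= hu ->]|[/= hs ->]].
  + case: (ltnP 0 u1) => hu1.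
    * have [l [hl hc]] := IH1 (u1.-1, s1) (or_introl (conj hu1 erefl)).
      exists (add l t2); split; first by apply/In_ropts_add; left; exists l.
      apply: ChA hc h2 _ _ => /=; lia.
    * have hu2 : 0 < u2 by lia.
      have [l [hl hc]] := IH2 (u2.-1, s2) (or_introl (conj hu2 erefl)).
      exists (add t1 l); split; first by apply/In_ropts_add; right; exists l.
      apply: ChA h1 hc _ _ => /=; lia.
  + case: (ltnP 0 s1) => hs1.
    * have [l [hl hc]] := IH1 (u1, s1.-1) (or_intror (conj hs1 erefl)).
      exists (add l t2); split; first by apply/In_ropts_add; left; exists l.
      apply: ChA hc h2 _ _ => /=; lia.
    * have hs2 : 0 < s2 by lia.
      have [l [hl hc]] := IH2 (u2, s2.-1) (or_intror (conj hs2 erefl)).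
      exists (add t1 l); split; first by apply/In_ropts_add; right; exists l.
      apply: ChA h1 hc _ _ => /=; lia.
Qed.

Lemma Ch_mul_up m : Ch (neg (mul_up m)) (m, 0).
Proof.
elim: m => [|m IH]; first exact: Ch0.
rewrite /mul_up iterS -/(mul_up m) neg_add.
apply: ChA ChD IH _ _ => /=; lia.
Qed.

Lemma mS_1 (S1 S2 : Type) (m1 : S1 -> S1 -> Prop) (m2 : S2 -> S2 -> Prop) a b c :
  m1 a b -> mS m1 m2 (a, c) (b, c).
Proof. by left. Qed.
Lemma mS_2 (S1 S2 : Type) (m1 : S1 -> S1 -> Prop) (m2 : S2 -> S2 -> Prop) a c d :
  m2 c d -> mS m1 m2 (a, c) (a, d).
Proof. by right. Qed.

Definition QL1 (p : (nat * nat) * nat) :=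
  (p.1.1 = 0 /\ p.1.2 = 0) \/ (1 <= p.2 /\ p.1.1 <= p.1.2 + p.2).
Definition QR1 (p : (nat * nat) * nat) :=
  (p.2 = 0 /\ ~ (p.1.1 = 0 /\ p.1.2 = 1)) \/ (1 <= p.2 /\ p.1.2 + p.2 <= p.1.1).

Lemma cl1L s : QL1 s -> forall s', mS lmD lmN s s' -> exists s'', mS rmD rmN s' s'' /\ QL1 s''.
Proof.
move: s => [[x y] k] hq [[x' y'] k'] [[hm /= ->]|[/= _ []]].
have [[a1 a2]|[a1 a2]] : (1 <= y' /\ QL1 ((x', y'.-1), k)) \/ (1 <= k /\ QL1 ((x', y'), k.-1)).
  move: hm; rewrite /lmD /=; case=> [[? [= -> ->]]|[? [= -> ->]]]; move: hq; rewrite /QL1 /=; lia.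
- by exists ((x', y'.-1), k); split => //; apply: mS_1.
- by exists ((x', y'), k.-1); split => //; apply: mS_2.
Qed.

Lemma cl1R s : QR1 s -> forall s', mS rmD rmN s s' -> exists s'', mS lmD lmN s' s'' /\ QR1 s''.
Proof.
move: s => [[x y] k] hq [[x' y'] k'] [[hm /= ->]|[/= [-> ->] hm]].
- have [[a1 a2]|[a1 a2]] : (1 <= x' /\ QR1 ((x'.-1, y'), k)) \/ (1 <= x' + y' /\ QR1 ((0, 0), k)).
    move: hm; rewrite /rmD /=; case=> [? [= -> ->]]; move: hq; rewrite /QR1 /=; lia.
  + by exists ((x'.-1, y'), k); split => //; apply: mS_1; left.
  + by exists ((0, 0), k); split => //; apply: mS_1; right.
- have [[a1 a2]|[a1 a2]] : (1 <= x /\ QR1 ((x.-1, y), k')) \/ (1 <= x + y /\ QR1 ((0, 0), k')).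
    move: hm; rewrite /rmN /=; case=> [? ->]; move: hq; rewrite /QR1 /=; lia.
  + by exists ((x.-1, y), k'); split => //; apply: mS_1; left.
  + by exists ((0, 0), k'); split => //; apply: mS_1; right.
Qed.

Definition QL2 (p : (nat * nat) * option nat) :=
  match p.2 with
  | Some j => p.1.1 = 0 \/ (1 <= p.1.1 /\ p.1.1 <= p.1.2 /\ j <= p.1.2 - p.1.1 + 1) \/
              (j = 0 /\ p.1.1 = p.1.2 + 1)
  | None => p.1.1 = 0 /\ p.1.2 = 0
  end.
Definition QR2 (p : (nat * nat) * option nat) :=
  match p.2 with
  | Some j => p.1.2 < p.1.1 \/ (1 <= p.1.1 /\ p.1.1 <= p.1.2 /\ p.1.2 - p.1.1 + 1 <= j)
  | None => ~ (p.1.1 = 0 /\ p.1.2 = 1)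
  end.

Lemma cl2L s : QL2 s -> forall s', mS lmD lmH s s' -> exists s'', mS rmD rmH s' s'' /\ QL2 s''.
Proof.
move: s => [[x y] h] hq [[x' y'] h'] [[hm /= ->]|[/= [-> ->] hm]].
- case: h hq hm => [j|] hq hm.
  + have [[a1 a2]|a2] : (1 <= y' /\ QL2 ((x', y'.-1), Some j)) \/ QL2 ((x', y'), None).
      move: hm; rewrite /lmD /=; case=> [[? [= -> ->]]|[? [= -> ->]]]; move: hq; rewrite /QL2 /=; lia.
    * by exists ((x', y'.-1), Some j); split => //; apply: mS_1.
    * by exists ((x', y'), None); split => //; apply: mS_2.
  + by move: hm hq; rewrite /lmD /QL2 /=; lia.
- move: hm hq => [j [-> [hj ->]]] hq.
  have [[a1 a2]|a2] : (1 <= y /\ QL2 ((x, y.-1), Some j.-1)) \/ QL2 ((x, y), None).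
    move: hq; rewrite /QL2 /=; lia.
  + by exists ((x, y.-1), Some j.-1); split => //; apply: mS_1.
  + by exists ((x, y), None); split => //; apply: mS_2.
Qed.

Lemma cl2R s : QR2 s -> forall s', mS rmD rmH s s' -> exists s'', mS lmD lmH s' s'' /\ QR2 s''.
Proof.
move: s => [[x y] h] hq [[x' y'] h'] [[hm /= ->]|[/= [-> ->] hm]].
- case: h hq hm => [j|] hq hm.
  + have [[a1 a2]|[[a1 a2]|[a1 a2]]] : (1 <= x' /\ QR2 ((x'.-1, y'), Some j)) \/
        (1 <= x' + y' /\ QR2 ((0, 0), Some j)) \/ (1 <= j /\ QR2 ((x', y'), Some j.-1)).
      move: hm; rewrite /rmD /=; case=> [? [= -> ->]]; move: hq; rewrite /QR2 /=; lia.
    * by exists ((x'.-1, y'), Some j); split => //; apply: mS_1; left.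
    * by exists ((0, 0), Some j); split => //; apply: mS_1; right.
    * by exists ((x', y'), Some j.-1); split => //; apply: mS_2; exists j.
  + have [[a1 a2]|[a1 a2]] : (1 <= x' /\ QR2 ((x'.-1, y'), None)) \/
        (1 <= x' + y' /\ QR2 ((0, 0), None)).
      move: hm; rewrite /rmD /=; case=> [? [= -> ->]]; move: hq; rewrite /QR2 /=; lia.
    * by exists ((x'.-1, y'), None); split => //; apply: mS_1; left.
    * by exists ((0, 0), None); split => //; apply: mS_1; right.
- move: hm => [hh ->].
  case: h hq hh => [j|] hq hh //.
  have [[a1 a2]|[a1 a2]] : (1 <= x /\ QR2 ((x.-1, y), None)) \/
      (1 <= x + y /\ QR2 ((0, 0), None)).
    move: hq; rewrite /QR2 /=; lia.
  + by exists ((x.-1, y), None); split => //; apply: mS_1; left.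
  + by exists ((0, 0), None); split => //; apply: mS_1; right.
Qed.

Definition QL3 (p : (nat * nat) * (nat * nat)) :=
  p.1.1 = 0 /\ ((~~ (odd p.1.2 (+) odd p.2.2) /\ p.1.2 <= p.2.1 + 1) \/
   ((odd p.1.2 (+) odd p.2.2) /\ ((p.1.2 = 0 /\ 2 <= p.2.1) \/ (1 <= p.1.2 /\ p.1.2 + 1 <= p.2.1)))).
Definition QR3 (p : (nat * nat) * (nat * nat)) :=
  p.1.1 = 0 /\ ((~~ (odd p.1.2 (+) odd p.2.2) /\ (p.2.1 = 0 \/ p.2.1 + 1 <= p.1.2)) \/
   ((odd p.1.2 (+) odd p.2.2) /\ p.2.1 + 3 <= p.1.2)).

Lemma odd_facts y : (odd y = true -> 1 <= y) /\ (odd y = false -> y = 0 \/ 2 <= y).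
Proof. split; case: y => [|[|y]] //= _; by [left | right]. Qed.

Ltac par y v := destruct y as [|[|y]]; destruct v as [|[|v]]; simpl in *;
  try (pose proof (odd_facts y); destruct (odd y));
  try (pose proof (odd_facts v); destruct (odd v)); simpl in *; lia.

Lemma cl3L s : QL3 s -> forall s', mS lmD lmC s s' -> exists s'', mS rmD rmC s' s'' /\ QL3 s''.
Proof.
move: s => [[x y] [u v]] hq [[x' y'] [u' v']] [[hm /= [-> ->]]|[/= [-> ->] hm]].
- have [[a1 a2]|[[a1 a2]|[a1 a2]]] : (1 <= y' /\ QL3 ((x', y'.-1), (u, v))) \/
      (1 <= u /\ QL3 ((x', y'), (u.-1, v))) \/ (1 <= v /\ QL3 ((x', y'), (u, v.-1))).
    move: hm; rewrite /lmD /=; case=> [[? [= -> ->]]|[? [= -> ->]]]; move: hq; rewrite /QL3 /=; par y v.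
  + by exists ((x', y'.-1), (u, v)); split => //; apply: mS_1.
  + by exists ((x', y'), (u.-1, v)); split => //; apply: mS_2; left.
  + by exists ((x', y'), (u, v.-1)); split => //; apply: mS_2; right.
- have [[a1 a2]|[[a1 a2]|[a1 a2]]] : (1 <= y /\ QL3 ((x, y.-1), (u', v'))) \/
      (1 <= u' /\ QL3 ((x, y), (u'.-1, v'))) \/ (1 <= v' /\ QL3 ((x, y), (u', v'.-1))).
    move: hm; rewrite /lmC /=; case=> [[? [= -> ->]]|[? [= -> ->]]]; move: hq; rewrite /QL3 /=; par y v.
  + by exists ((x, y.-1), (u', v')); split => //; apply: mS_1.
  + by exists ((x, y), (u'.-1, v')); split => //; apply: mS_2; left.
  + by exists ((x, y), (u', v'.-1)); split => //; apply: mS_2; right.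
Qed.

Lemma cl3R s : QR3 s -> forall s', mS rmD rmC s s' -> exists s'', mS lmD lmC s' s'' /\ QR3 s''.
Proof.
move: s => [[x y] [u v]] hq [[x' y'] [u' v']] [[hm /= [-> ->]]|[/= [-> ->] hm]].
- have [[a1 a2]|[[a1 a2]|[[a1 a2]|[a1 a2]]]] : (1 <= x' /\ QR3 ((x'.-1, y'), (u, v))) \/
      (1 <= x' + y' /\ QR3 ((0, 0), (u, v))) \/
      (1 <= u /\ QR3 ((x', y'), (u.-1, v.+1))) \/ (1 <= v /\ QR3 ((x', y'), (u, v.-1))).
    move: hm; rewrite /rmD /=; case=> [? [= -> ->]]; move: hq; rewrite /QR3 /=; par y v.
  + by exists ((x'.-1, y'), (u, v)); split => //; apply: mS_1; left.
  + by exists ((0, 0), (u, v)); split => //; apply: mS_1; right.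
  + by exists ((x', y'), (u.-1, v.+1)); split => //; apply: mS_2; left.
  + by exists ((x', y'), (u, v.-1)); split => //; apply: mS_2; right.
- have [[a1 a2]|[[a1 a2]|[[a1 a2]|[a1 a2]]]] : (1 <= x /\ QR3 ((x.-1, y), (u', v'))) \/
      (1 <= x + y /\ QR3 ((0, 0), (u', v'))) \/
      (1 <= u' /\ QR3 ((x, y), (u'.-1, v'.+1))) \/ (1 <= v' /\ QR3 ((x, y), (u', v'.-1))).
    move: hm; rewrite /rmC /=; case=> [[? [= -> ->]]|[? [= -> ->]]]; move: hq; rewrite /QR3 /=; par y v.
  + by exists ((x.-1, y), (u', v')); split => //; apply: mS_1; left.
  + by exists ((0, 0), (u', v')); split => //; apply: mS_1; right.
  + by exists ((x, y), (u'.-1, v'.+1)); split => //; apply: mS_2; left.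
  + by exists ((x, y), (u', v'.-1)); split => //; apply: mS_2; right.
Qed.

Unset Implicit Arguments. Set Strict Implicit.

Theorem theorem6 (n : nat) (col : 'I_n.+1 -> color) :
  2 <= n ->
  (forall i : 'I_n.+1, i != ord0 -> (col i == colA) || (col i == colB)) ->
  let a := leaf_count col colA in
  let b := leaf_count col colB in
  (col ord0 = colA ->
     (b < a -> game_eq (dom_game (@star_adj n) col) (nat_game (a - b))) /\
     (1 <= a <= b -> game_eq (dom_game (@star_adj n) col) (half_pow (b - a + 1))) /\
     (a = 0 -> odd b -> game_eq (dom_game (@star_adj n) col) (add (mul_up b.-1) star)) /\
     (a = 0 -> ~~ odd b -> game_eq (dom_game (@star_adj n) col) (mul_up b.-1))) /\
  (col ord0 = colB ->
     game_eq (dom_game (@star_adj n) col)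
             (neg (dom_game (@star_adj n) (swap_col \o col)))).
Proof.
move=> hn hleaf a b; split; last first.
  by move=> _; rewrite /game_eq /dom_game neg_dom_swap; exact: mirror.
move=> hc0.
have hn0 : 0 < n by lia.
have hDP := DP_init col.
have sl : sound_l (DP col) lmD by apply: DP_sound_l.
have sr : sound_r (DP col) rmD by apply: DP_sound_r.
have cl : compl_l (DP col) lmD by apply: DP_compl_l.
have cr : compl_r (DP col) rmD by apply: DP_compl_r.
rewrite /game_eq /second_player_win.
split; [|split; [|split]].
- move=> hab; apply/andP; split.
  + apply: (le0_by QL1 (sumS_l sl N_sound_l) (sumC_r cr N_compl_r) cl1L _ ((a, b), a - b)).
    * by exists (dom_game (@star_adj n) col), (neg (nat_game (a - b))).
    * rewrite /QL1 /=; lia.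
  + apply: (ge0_by QR1 (sumS_r sr N_sound_r) (sumC_l cl N_compl_l) cl1R _ ((a, b), a - b)).
    * by exists (dom_game (@star_adj n) col), (neg (nat_game (a - b))).
    * rewrite /QR1 /=; lia.
- move=> /andP [h1 h2]; apply/andP; split.
  + apply: (le0_by QL2 (sumS_l sl H_sound_l) (sumC_r cr H_compl_r) cl2L _ ((a, b), Some (b - a + 1))).
    * by exists (dom_game (@star_adj n) col), (neg (half_pow (b - a + 1))).
    * rewrite /QL2 /=; lia.
  + apply: (ge0_by QR2 (sumS_r sr H_sound_r) (sumC_l cl H_compl_l) cl2R _ ((a, b), Some (b - a + 1))).
    * by exists (dom_game (@star_adj n) col), (neg (half_pow (b - a + 1))).
    * rewrite /QR2 /=; lia.
- move=> ha hb.
  have hC : Ch (neg (add (mul_up b.-1) star)) (b.-1, 1).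
    rewrite neg_add; apply: (ChA (Ch_mul_up _) ChS) => /=; lia.
  apply/andP; split.
  + apply: (le0_by QL3 (sumS_l sl C_sound_l) (sumC_r cr C_compl_r) cl3L _ ((a, b), (b.-1, 1))).
    * by exists (dom_game (@star_adj n) col), (neg (add (mul_up b.-1) star)).
    * rewrite /QL3 /= hb /=; lia.
  + apply: (ge0_by QR3 (sumS_r sr C_sound_r) (sumC_l cl C_compl_l) cl3R _ ((a, b), (b.-1, 1))).
    * by exists (dom_game (@star_adj n) col), (neg (add (mul_up b.-1) star)).
    * rewrite /QR3 /= hb /=; lia.
- move=> ha hb.
  have hC := Ch_mul_up b.-1.
  apply/andP; split.
  + apply: (le0_by QL3 (sumS_l sl C_sound_l) (sumC_r cr C_compl_r) cl3L _ ((a, b), (b.-1, 0))).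
    * by exists (dom_game (@star_adj n) col), (neg (mul_up b.-1)).
    * rewrite /QL3 /= (negbTE hb) /=; lia.
  + apply: (ge0_by QR3 (sumS_r sr C_sound_r) (sumC_l cl C_compl_l) cl3R _ ((a, b), (b.-1, 0))).
    * by exists (dom_game (@star_adj n) col), (neg (mul_up b.-1)).
    * rewrite /QR3 /= (negbTE hb) /=; lia.
Qed.
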